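(* Let $k\ge 2$ be an even integer and $\ell\ge 2$ an integer. Then the rational number $$\frac{(k+1)(\ell-1)B_k}{\ell^{k+1}-1}$$ has $2$-adic valuation exactly $-1$. Consequently, for every integer $n\ge 2$ dividing $k$, there is no polynomial $f\in\mathbb{Q}[x]$ with $$\frac{B_{k+1}(\ell x+1)-B_{k+1}(x+1)}{x}=(\ell^{k+1}-1)f(x)^n.$$
   Context: $B_i$ denote the Bernoulli numbers ($B_0=1$, $B_1=-1/2$, $B_2=1/6,\dots$) and $B_q(x)=\sum_{i=0}^{q}\binom{q}{i}B_i x^{q-i}$ the Bernoulli polynomials. The $2$-adic valuation of a nonzero rational $a/b$ is $v_2(a)-v_2(b)$. *)

(* Defs.v *)
From HB Require Import structures.
From mathcomp Require Import all_boot all_order all_algebra.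
Set Implicit Arguments. Unset Strict Implicit. Unset Printing Implicit Defensive.
Import Order.TTheory GRing.Theory Num.Theory.
Local Open Scope ring_scope.

(* bern_seq n = [:: B_0; ...; B_n], via the standard recurrence
   sum_{i=0}^{n} C(n+1,i) B_i = 0 (n >= 1), B_0 = 1, so that B_1 = -1/2. *)
Fixpoint bern_seq (n : nat) : seq rat :=
  match n with
  | 0 => [:: 1]
  | n'.+1 =>
      let s := bern_seq n' in
      rcons s (- (\sum_(i < n'.+1) ('C(n'.+2, i))%:R * s`_i) / (n'.+2)%:R)
  end.

Definition bernoulli (n : nat) : rat := (bern_seq n)`_n.

Definition bernoulli_poly (q : nat) : {poly rat} :=
  \sum_(i < q.+1) (('C(q, i))%:R * bernoulli i) *: 'X^(q - i).

Definition v2 (r : rat) : int :=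
  (logn 2 `|numq r|%N)%:Z - (logn 2 (`|denq r|%N))%:Z.

(* Main.v *)
Require Import Defs.
From HB Require Import structures.
From mathcomp Require Import all_boot all_order all_algebra.
From mathcomp Require Import ring lra zify.
Import Order.TTheory GRing.Theory Num.Theory.
Local Open Scope ring_scope.


Lemma size_bern n : size (bern_seq n) = n.+1.
Proof. by elim: n => //= n IH; rewrite size_rcons IH. Qed.

Lemma bern_prefix n i : (i <= n)%N -> (bern_seq n)`_i = bernoulli i.
Proof.
rewrite /bernoulli; elim: n => [|n IH] Hi.
  by have -> : i = 0%N by lia.
case: (ltnP i n.+1) => Hin.
  by rewrite /= nth_rcons size_bern Hin IH.
by have -> : i = n.+1 by lia.
Qed.

Lemma bern_rec n : bernoulli n.+1 =
  - (\sum_(i < n.+1) ('C(n.+2, i))%:R * bernoulli i) / (n.+2)%:R.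
Proof.
rewrite {1}/bernoulli /= nth_rcons size_bern ltnn eqxx.
congr (- _ / _); apply: eq_bigr => i _.
by rewrite bern_prefix // -ltnS.
Qed.

Lemma bern0 : bernoulli 0 = 1. Proof. by []. Qed.

Lemma bern_sum0 m : (2 <= m)%N -> \sum_(i < m) ('C(m, i))%:R * bernoulli i = 0.
Proof.
case: m => [|[|n]] // _.
rewrite big_ord_recr /= bern_rec binSn.
have H : (n.+2)%:R != 0 :> rat by rewrite pnatr_eq0.
set S := \sum_(i < n.+1) _.
by rewrite mulrCA mulfV // mulr1 subrr.
Qed.

Lemma bern1 : bernoulli 1 = - 1/2.
Proof. by rewrite bern_rec big_ord1 bern0 bin0 mulr1. Qed.

Lemma Bp_deriv n : (bernoulli_poly n.+1)^`() = (n.+1)%:R *: bernoulli_poly n.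
Proof.
rewrite /bernoulli_poly raddf_sum big_ord_recr /= subnn derivZ derivXn /= scaler0 addr0.
rewrite scaler_sumr; apply: eq_bigr => i _.
rewrite derivZ derivXn -scaler_nat !scalerA.
have Hi : (i < n.+1)%N by [].
rewrite subSn // /= ; congr (_ *: _).
have E := mul_bin_down n.+1 i; rewrite /= in E.
by rewrite mulrA -natrM E -subSn // mulrAC -natrM mulnC.
Qed.

Lemma Bp_at0 n : (bernoulli_poly n).[0] = bernoulli n.
Proof.
rewrite /bernoulli_poly horner_sum big_ord_recr /= subnn hornerZ hornerXn expr0 mulr1 binn mul1r.
rewrite big1 ?add0r // => i _; rewrite hornerZ hornerXn expr0n.
have -> : (n - i == 0)%N = false by apply/negbTE; rewrite subn_eq0 -ltnNge.
by rewrite mulr0.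
Qed.

Lemma Bp_at1 n : (2 <= n)%N -> (bernoulli_poly n).[1] = bernoulli n.
Proof.
move=> Hn; rewrite /bernoulli_poly horner_sum.
under eq_bigr => i _ do rewrite hornerZ hornerXn expr1n mulr1.
by rewrite big_ord_recr /= bern_sum0 // add0r binn mul1r.
Qed.

Lemma deriv0_const (p : {poly rat}) : p^`() = 0 -> p = (p.[0])%:P.
Proof.
move=> H; apply/polyP => i; rewrite coefC horner_coef0.
case: i => [|i] //=.
have := congr1 (fun q : {poly rat} => q`_i) H; rewrite /= coef_deriv coef0 => /eqP.
by rewrite mulrn_eq0 /= => /eqP.
Qed.

Lemma Bp0 : bernoulli_poly 0 = 1.
Proof. by rewrite /bernoulli_poly big_ord1 bin0 bern0 mul1r scale1r expr0. Qed.

Definition Sp n := bernoulli_poly n \Po (1 - 'X) - ((-1)^+n) *: bernoulli_poly n.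

Lemma Sp_deriv n : (Sp n.+1)^`() = - ((n.+1)%:R *: Sp n).
Proof.
rewrite /Sp derivB deriv_comp derivZ !Bp_deriv comp_polyZ derivB derivX.
rewrite -polyC1 derivC sub0r mulrN1 exprS /Sp scalerBr scalerA scalerA.
rewrite opprD opprK; congr (_ + _).
by rewrite mulN1r mulNr scaleNr opprK mulrC.
Qed.

Lemma Sp_eval m : (2 <= m)%N -> (Sp m).[1] = (Sp m).[0].
Proof.
move=> Hm; rewrite /Sp !hornerE !horner_comp !hornerE.
by rewrite subrr !Bp_at0 !Bp_at1.
Qed.

Lemma Sp0 n : Sp n = 0.
Proof.
elim: n => [|n IH].
  by rewrite /Sp Bp0 expr0 scale1r -polyC1 comp_polyC subrr.
set c := (Sp n.+1).[0].
have Hc : Sp n.+1 = c%:P by apply: deriv0_const; rewrite Sp_deriv IH scaler0 oppr0.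
set T := Sp n.+2 + ((n.+2)%:R * c) *: 'X.
have HT : T^`() = 0.
  by rewrite /T derivD Sp_deriv Hc derivZ derivX -scalerA alg_polyC addNr.
have E := @deriv0_const _ HT.
have := congr1 (fun q : {poly rat} => q.[1]) E.
have HH : forall x, (Sp n.+2 + ((n.+2)%:R * c) *: 'X).[x] = (Sp n.+2).[x] + (n.+2)%:R * c * x.
  by move=> x; rewrite hornerD hornerZ hornerX.
rewrite /= hornerC /T !HH Sp_eval // mulr0 addr0 mulr1 => /eqP.
rewrite -subr_eq0 addrAC subrr add0r mulf_eq0 pnatr_eq0 /= => /eqP c0.
by rewrite Hc c0.
Qed.

Lemma bern_odd m : (3 <= m)%N -> odd m -> bernoulli m = 0.
Proof.
move=> Hm Ho.
have := congr1 (fun q : {poly rat} => q.[0]) (Sp0 m).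
rewrite /Sp /= !hornerE horner_comp !hornerE Bp_at0 Bp_at1 1?ltnW //.
rewrite -signr_odd Ho expr1 mulN1r opprK => /eqP.
rewrite -mulr2n mulrn_eq0 /= => /eqP //.
Qed.

Definition Z2 (r : rat) := exists (a : int) (b : nat), odd b /\ r = a%:~R / b%:R.
Definition E2 (r : rat) := Z2 (r / 2).

Lemma odd_neq0 {b : nat} : odd b -> b%:R != 0 :> rat.
Proof. by rewrite pnatr_eq0; case: b. Qed.

Lemma Z2_int (z : int) : Z2 z%:~R.
Proof. by exists z, 1%N; rewrite divr1. Qed.

Lemma Z2_nat (n : nat) : Z2 n%:R.
Proof. by have := Z2_int n. Qed.

Lemma Z2D x y : Z2 x -> Z2 y -> Z2 (x + y).
Proof.
move=> [a [b [Hb ->]]] [c [d [Hd ->]]].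
exists (a * d%:Z + c * b%:Z), (b * d)%N; split; first by rewrite oddM Hb Hd.
have Hb0 := odd_neq0 Hb; have Hd0 := odd_neq0 Hd.
rewrite intrD !intrM natrM /=. field. by apply/andP.
Qed.

Lemma Z2N x : Z2 x -> Z2 (- x).
Proof. move=> [a [b [Hb ->]]]; exists (- a), b; split => //; by rewrite mulrNz mulNr. Qed.

Lemma Z2M x y : Z2 x -> Z2 y -> Z2 (x * y).
Proof.
move=> [a [b [Hb ->]]] [c [d [Hd ->]]].
exists (a * c), (b * d)%N; split; first by rewrite oddM Hb Hd.
have Hb0 := odd_neq0 Hb; have Hd0 := odd_neq0 Hd.
rewrite !intrM natrM /=. field. by apply/andP.
Qed.

Lemma Z2B x y : Z2 x -> Z2 y -> Z2 (x - y).
Proof. by move=> Hx Hy; apply: Z2D => //; apply: Z2N. Qed.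

Lemma Z2_invodd (m : nat) : odd m -> Z2 (m%:R)^-1.
Proof. by move=> Hm; exists 1, m; split => //; rewrite mul1r. Qed.

Lemma Z2_sum n (F : 'I_n -> rat) : (forall i, Z2 (F i)) -> Z2 (\sum_(i < n) F i).
Proof. by move=> H; apply: (big_ind Z2) => //; [apply: (Z2_nat 0) | apply: Z2D]. Qed.

Lemma E2D x y : E2 x -> E2 y -> E2 (x + y).
Proof. by rewrite /E2 mulrDl; apply: Z2D. Qed.

Lemma E2N x : E2 x -> E2 (- x).
Proof. by rewrite /E2 mulNr; apply: Z2N. Qed.

Lemma E2B x y : E2 x -> E2 y -> E2 (x - y).
Proof. by move=> Hx Hy; apply: E2D => //; apply: E2N. Qed.

Lemma E2M x y : Z2 x -> E2 y -> E2 (x * y).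
Proof. by rewrite /E2 -mulrA; apply: Z2M. Qed.

Lemma E2_Z2 x : E2 x -> Z2 x.
Proof.
move=> H; have -> : x = 2 * (x / 2) by rewrite mulrC divfK.
by apply: Z2M => //; apply: (Z2_nat 2).
Qed.

Lemma E2_even (n : nat) : ~~ odd n -> E2 n%:R.
Proof.
move=> Hn; rewrite /E2; have -> : n = (n./2 * 2)%N.
  by rewrite -{1}(odd_double_half n) (negbTE Hn) add0n -mul2n mulnC.
rewrite natrM mulfK //; apply: Z2_nat.
Qed.

Lemma E2_sum n (F : 'I_n -> rat) : (forall i, E2 (F i)) -> E2 (\sum_(i < n) F i).
Proof.
move=> H; apply: (big_ind E2) => //; last by apply: E2D.
exact: (E2_even 0 isT).
Qed.

Lemma Z2_unit x : Z2 x -> E2 (x - 1) ->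
  exists (a : int) (b : nat), odd `|a|%N /\ odd b /\ x = a%:~R / b%:R.
Proof.
move=> [a [b [Hb Hx]]] [c [d [Hd H]]].
exists a, b; split; last by split.
have Hb0 := odd_neq0 Hb; have Hd0 := odd_neq0 Hd.
have R : a%:~R * d%:R = b%:R * d%:R + 2 * c%:~R * b%:R :> rat.
  apply/eqP; rewrite -subr_eq0.
  have -> : a%:~R * d%:R - (b%:R * d%:R + 2 * c%:~R * b%:R) =
     2 * b%:R * d%:R * ((a%:~R / b%:R - 1) / 2 - c%:~R / d%:R) :> rat by field; apply/andP.
  by rewrite -Hx H subrr mulr0.
have Ri : a * d%:Z = b%:Z * d%:Z + 2 * c * b%:Z.
  apply: (@intr_inj rat); rewrite !rmorphD !rmorphM /=; exact: R.
apply/negP => Ha.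
have H2a : (2 %| a)%Z by change (2 %| `|a|)%N; rewrite dvdn2; apply/negP.
have H2 : (2 %| (b * d)%N%:Z)%Z.
  have -> : (b * d)%N%:Z = a * d%:Z - 2 * c * b%:Z by rewrite Ri PoszM; ring.
  apply: rpredB; first exact: dvdz_mulr.
  by apply: dvdz_mulr; apply: dvdz_mulr; rewrite dvdzz.
by move: H2; change ((2 %| `|(b * d)%N%:Z|)%N -> False); rewrite dvdn2 /= oddM Hb Hd.
Qed.

Lemma logn2_odd {n} : odd n -> logn 2 n = 0%N.
Proof.
move=> Hn; apply/eqP; rewrite -leqn0 leqNgt logn_gt0 mem_primes dvdn2 Hn /=.
by rewrite andbF.
Qed.

Lemma logn2_gt0 n : (0 < logn 2 n)%N -> (2 %| n)%N.
Proof. by rewrite logn_gt0 mem_primes => /and3P []. Qed.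

Lemma v2_half (r : rat) (a : int) (b : nat) : odd `|a|%N -> odd b ->
  r = a%:~R / (2 * b)%N%:R -> r != 0 /\ v2 r = -1.
Proof.
move=> Ha Hb Hr.
have a0 : a != 0 by apply/negP => /eqP a0; move: Ha; rewrite a0.
have b0 : (2 * b)%N%:R != 0 :> rat by rewrite pnatr_eq0 muln_eq0 negb_or /=; move: Hb; case: (b) => //.
have r0 : r != 0 by rewrite Hr mulf_neq0 ?invr_eq0 // intr_eq0.
split => //.
have E : numq r * (2 * b)%N%:Z = a * denq r.
  apply: (@intr_inj rat); rewrite !rmorphM /=.
  have Hd : (denq r)%:~R != 0 :> rat by rewrite intr_eq0 denq_neq0.
  have := divq_num_den r; rewrite {3}Hr => H.
  by apply/eqP; rewrite -eqr_div // H.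
have En := congr1 absz E; rewrite !abszM /= in En.
have n0 : (0 < `|numq r|)%N by rewrite absz_gt0 numq_eq0.
have d0 : (0 < `|denq r|)%N by rewrite absz_gt0 denq_neq0.
have Hb2 : (0 < 2 * b)%N by rewrite muln_gt0 /=; move: Hb; case: (b).
have Ha0 : (0 < `|a|)%N by rewrite absz_gt0.
have L := congr1 (logn 2) En.
rewrite !lognM // ?(logn2_odd Ha) ?(logn2_odd Hb) in L; last by move: Hb; case: (b).
have l22 : logn 2 2 = 1%N by [].
rewrite l22 in L.
have Ln : logn 2 `|numq r| = 0%N.
  apply/eqP; rewrite -leqn0 leqNgt; apply/negP => /logn2_gt0 H1.
  have H2 : (2 %| `|denq r|)%N by apply: logn2_gt0; lia.
  have := coprime_num_den r; rewrite /coprime => /eqP Hg.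
  have : (2 %| gcdn `|numq r| `|denq r|)%N by rewrite dvdn_gcd H1 H2.
  by rewrite Hg.
rewrite /v2 Ln; have -> : logn 2 `|denq r| = 1%N by lia.
by [].
Qed.

Lemma even_binom m : (0 < m)%N ->
  \sum_(i < m.+1) ('C(m, i))%:R * (if odd i then 0 else 1) = 2 ^+ m.-1 :> rat.
Proof.
move=> Hm.
have H20 : (m == 0%N) = false by move: Hm; case: (m).
apply: (@mulfI _ 2) => //.
have -> : 2 * 2 ^+ m.-1 = (1 + 1) ^+ m + (1 + -1) ^+ m :> rat.
  by rewrite -exprS prednK // subrr expr0n H20 addr0.
rewrite !exprDn -big_split mulr_sumr /=; apply: eq_bigr => i _.
rewrite !expr1n !mul1r -signr_odd; case: (odd i) => /=.
  by rewrite mulr0 mulr0 expr1 mulNrn addrN.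
by rewrite expr0 mulr1 -[2]/(1 + 1) mulrDl mul1r.
Qed.

Lemma bern_2adic n : (2 <= n)%N -> ~~ odd n ->
  Z2 (2 * bernoulli n) /\ E2 (2 * bernoulli n - 1).
Proof.
elim/ltn_ind: n => n IH Hn Hev.
have [n' En] : exists n', n = n'.+2 by exists n.-2; lia.
subst n; set n := n'.+2.
set e := fun i : nat => (if odd i then 0 else 1 : rat).
have Hrec : (n.+1)%:R * bernoulli n = - \sum_(i < n) ('C(n.+1, i))%:R * bernoulli i.
  have := bern_sum0 n.+1 (leqW Hn); rewrite big_ord_recr /= binSn => H.
  by apply/eqP; rewrite -addr_eq0 addrC H.
have Hsplit : 2 * \sum_(i < n) ('C(n.+1, i))%:R * bernoulli i =
   \sum_(i < n) ('C(n.+1, i))%:R * e i +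
   \sum_(i < n) ('C(n.+1, i))%:R * (2 * bernoulli i - e i).
  rewrite -big_split mulr_sumr /=; apply: eq_bigr => i _; ring.
have Hpart1 : \sum_(i < n) ('C(n.+1, i))%:R * e i = (2 ^ n)%N%:R - (n.+1)%:R.
  have := even_binom n.+1 isT.
  rewrite 2!big_ord_recr /= binSn binn => H.
  have Hev' : odd n' = false by move: Hev; rewrite /= negbK => /negbTE.
  rewrite natrX -H /e /= !negbK Hev' /= mulr1 mulr0 addr0; ring.

set D := \sum_(i < n') ('C(n.+1, i.+2))%:R * (2 * bernoulli i.+2 - e i.+2).
have HD : E2 D.
  apply: E2_sum => i; apply: E2M; first exact: Z2_nat.
  case Ho : (odd i.+2).
    rewrite bern_odd //; last by move: Ho; case: (nat_of_ord i).
    rewrite /e; case: ifP => [_|]; last by rewrite Ho.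
    rewrite mulr0 subrr; exact: (E2_even 0 isT).
  rewrite /e; case: ifP => [|_]; first by rewrite Ho.
  apply: (proj2 (IH i.+2 _ _ _)) => //; last by rewrite Ho.
  by rewrite ltnS ltnS.
have Hpart2 : \sum_(i < n) ('C(n.+1, i))%:R * (2 * bernoulli i - e i) =
    1 - (n.+1)%:R + D.
  rewrite !big_ord_recl /= bin0 bin1 bern0 bern1 /e /=.
  by rewrite addrA; congr (_ + _); field.
have Hn0 : (n.+1)%:R != 0 :> rat by rewrite pnatr_eq0.
have HX : 2 * bernoulli n = - ((2 ^ n)%N%:R - (n.+1)%:R + (1 - (n.+1)%:R + D)) / (n.+1)%:R.
  apply: (@mulfI _ (n.+1)%:R) => //; rewrite mulrCA Hrec -Hpart1 -Hpart2 -Hsplit; by field.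
have Hm : (n.+1)%:R = n%:R + 1 :> rat by rewrite -addn1 natrD.
have Hodd : odd (n.+1) by rewrite /= Hev.
split.
  rewrite HX; apply: Z2M; last exact: Z2_invodd.
  apply: Z2N; apply: Z2D; first by apply: Z2B; apply: Z2_nat.
  apply: Z2D; first by apply: Z2B; [exact: (Z2_nat 1) | exact: Z2_nat].
  exact: E2_Z2.
have -> : 2 * bernoulli n - 1 = (n%:R - (2 ^ n)%N%:R - D) * ((n.+1)%:R)^-1.
  by rewrite HX; move: Hn0; rewrite Hm => Hn0; field.
rewrite mulrC; apply: E2M; first exact: Z2_invodd.
apply: E2B => //; apply: E2B; first exact: E2_even.
by apply: E2_even; rewrite oddX.
Qed.

Lemma no_root (r : rat) (A : int) (B n : nat) : odd `|A|%N -> odd B ->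
  r = A%:~R / (2 * B)%N%:R -> (2 <= n)%N -> forall y : rat, y ^+ n != r.
Proof.
move=> HA HB Hr Hn y; apply/eqP => Hy.
have [r0 _] := v2_half _ _ _ HA HB Hr.
have y0 : y != 0 by apply/negP => /eqP y0; move: r0; rewrite -Hy y0 expr0n; case: (n) Hn.
have B0 : (2 * B)%N%:R != 0 :> rat by rewrite pnatr_eq0 muln_eq0 negb_or /=; case: (B) HB.
have Hd : (denq y)%:~R != 0 :> rat by rewrite intr_eq0 denq_neq0.
have Hdn : (denq y)%:~R ^+ n != 0 :> rat by rewrite expf_neq0.
have E : numq y ^+ n * (2 * B)%N%:Z = A * denq y ^+ n.
  apply: (@intr_inj rat); rewrite !rmorphM !rmorphXn /=.
  by apply/eqP; rewrite -eqr_div // -Hr -Hy -exprVn -exprMn divq_num_den.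
have En := congr1 absz E; rewrite !abszM !abszX /= in En.
have n0 : (0 < `|numq y|)%N by rewrite absz_gt0 numq_eq0.
have d0 : (0 < `|denq y|)%N by rewrite absz_gt0 denq_neq0.
have HA0 : (0 < `|A|)%N by move: HA; case: (`|A|%N).
have HB0 : (0 < B)%N by move: HB; case: (B).
have L := congr1 (logn 2) En.
rewrite !lognM ?expn_gt0 ?n0 ?d0 // ?muln_gt0 ?HB0 // !lognX (logn2_odd HA) (logn2_odd HB) in L.
have l22 : logn 2 2 = 1%N by [].
rewrite l22 in L.
move: L; set a := logn 2 `|numq y|; set b := logn 2 `|denq y| => L.
case: (leqP b a) => H.
  have : (n * b <= n * a)%N by rewrite leq_mul2l H orbT.
  lia.
have : (n * a.+1 <= n * b)%N by rewrite leq_mul2l H orbT.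
rewrite mulnS; lia.
Qed.

Lemma odd_geom l m : odd (\sum_(i < m) l ^ i) = if odd l then odd m else (0 < m)%N.
Proof.
elim: m => [|m IH]; first by rewrite big_ord0; case: (odd l).
rewrite big_ord_recr /= oddD IH oddX; case: (odd l) => /=; first by rewrite orbT addbT.
by case: m {IH}.
Qed.

Theorem mainTheorem5 (k l : nat) :
  (2 <= k)%N -> ~~ odd k -> (2 <= l)%N ->
  (let r := ((k.+1)%:R * (l%:R - 1) * bernoulli k) / ((l%:R : rat) ^+ k.+1 - 1) in
   r != 0 /\ v2 r = (-1)%R)
  /\
  (forall n : nat, (2 <= n)%N -> (n %| k)%N ->
     ~ exists f : {poly rat},
         (bernoulli_poly k.+1 \Po ((l%:R : rat) *: 'X + 1))
         - (bernoulli_poly k.+1 \Po ('X + 1))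
         = 'X * (((l%:R : rat) ^+ k.+1 - 1) *: f ^+ n)).
Proof.
move=> Hk Hkev Hl.
have [Z Ex] := bern_2adic k Hk Hkev.
have [a [b [Ha [Hb Hx]]]] := Z2_unit _ Z Ex.
set s := (\sum_(i < k.+1) l ^ i)%N.
have Hs : odd s by rewrite /s odd_geom /= Hkev; case: (odd l).
have Hl1 : (l.-1)%:R = l%:R - 1 :> rat by rewrite -{2}(prednK (ltnW Hl)) -natr1 addrK.
have Hden : (l%:R : rat) ^+ k.+1 - 1 = (l%:R - 1) * s%:R.
  have Hp : (0 < l ^ k.+1)%N by rewrite expn_gt0 (ltnW Hl).
  by rewrite -natrX -{1}(prednK Hp) -natr1 addrK predn_exp natrM Hl1.
have l0 : (l%:R - 1) != 0 :> rat by rewrite -Hl1 pnatr_eq0; case: (l) Hl => [|[]].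
have s0 : s%:R != 0 :> rat by exact: odd_neq0.
have b0 : b%:R != 0 :> rat by exact: odd_neq0.
have HB : bernoulli k = a%:~R / (2 * b)%N%:R.
  by apply: (@mulfI _ 2) => //; rewrite Hx natrM; field.
set r := ((k.+1)%:R * (l%:R - 1) * bernoulli k) / ((l%:R : rat) ^+ k.+1 - 1).
have Hr : r = ((k.+1)%:Z * a)%:~R / (2 * (b * s))%N%:R.
  rewrite /r Hden HB !natrM intrM.
  change ((k.+1)%:Z%:~R) with ((k.+1)%:R : rat); by field; apply/and3P.
have HA : odd (absz ((k.+1)%:Z * a)%R) by rewrite abszM oddM /= Hkev Ha.
have Hbs : odd (b * s) by rewrite oddM Hb Hs.
split; first exact: (v2_half _ _ _ HA Hbs Hr).
move=> n Hn _ [f Hf].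
have := congr1 (fun p : {poly rat} => (p^`()).[0]) Hf.
rewrite /= !derivE !deriv_comp !Bp_deriv !derivD derivZ derivX (_ : (1 : {poly rat})^`() = 0) ?derivC ?polyC1 // ?addr0 ?mulr1.
rewrite alg_polyC !comp_polyZ mul1r hornerD hornerN hornerM hornerC !hornerZ !horner_comp !hornerD hornerM hornerX mul0r addr0 hornerZ hornerX !hornerE.
rewrite Bp_at1 // => H.
have c0 : (l%:R : rat) ^+ k.+1 - 1 != 0 by rewrite Hden mulf_neq0.
have Hy : f.[0] ^+ n = r.
  by apply: (mulfI c0); rewrite -H /r; field.
by apply/eqP: Hy; apply: (no_root _ _ _ _ HA Hbs Hr Hn).
Qed.
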